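(* Let $Q$ be an indefinite irrational ternary quadratic form with $\det Q=1$. Then there are at most four rational isotropic lines through the origin, and at most four rational degenerate planes through the origin.
   Context: A quadratic form is rational if it is proportional to a form with rational coefficients, and irrational otherwise. A line through the origin is rational if it is spanned by a vector of $\mathbb{Z}^3$, and isotropic if $Q$ vanishes on a nonzero vector of it. A plane through the origin is rational if spanned by vectors of $\mathbb{Z}^3$, and degenerate if the restriction of $Q$ to it is the square of a linear form. *)

(* Defs.v *)
From HB Require Import structures.
From mathcomp Require Import all_boot all_order all_algebra.
From mathcomp Require Import reals.

Set Implicit Arguments.
Unset Strict Implicit.
Unset Printing Implicit Defensive.

Import Order.TTheory GRing.Theory Num.Theory.
Local Open Scope ring_scope.

Section QF.
Variable R : realType.

Definition qf (Q : 'M[R]_3) (x : 'rV[R]_3) : R := (x *m Q *m x^T) 0 0.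

Definition indefinite (Q : 'M[R]_3) : Prop :=
  (exists x, 0 < qf Q x) /\ (exists y, qf Q y < 0).

Definition rational_form (Q : 'M[R]_3) : Prop :=
  exists (c : R) (Q' : 'M[rat]_3), c != 0 /\ Q = c *: map_mx (fun q => ratr q) Q'.

Definition irrational_form (Q : 'M[R]_3) : Prop := ~ rational_form Q.

Definition zvec (v : 'rV[int]_3) : 'rV[R]_3 := map_mx (fun z => z%:~R) v.

Definition rational_line (U : {vspace 'rV[R]_3}) : Prop :=
  \dim U = 1%N /\ exists v : 'rV[int]_3, U = <[zvec v]>%VS.

Definition isotropic_line (Q : 'M[R]_3) (U : {vspace 'rV[R]_3}) : Prop :=
  exists x, x \in U /\ x != 0 /\ qf Q x = 0.

Definition rational_plane (U : {vspace 'rV[R]_3}) : Prop :=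
  \dim U = 2%N /\ exists u v : 'rV[int]_3, U = (<[zvec u]> + <[zvec v]>)%VS.

(* restriction of Q to U is (up to a real scalar, i.e. up to sign) the square
   of a linear form; a linear form on U extends to R^3, i.e. x |-> x a^T *)
Definition degenerate_plane (Q : 'M[R]_3) (U : {vspace 'rV[R]_3}) : Prop :=
  exists (c : R) (a : 'rV[R]_3),
    forall x, x \in U -> qf Q x = c * ((x *m a^T) 0 0) ^+ 2.

End QF.

(* Main.v *)
Require Import Defs.
From HB Require Import structures.
From mathcomp Require Import all_boot all_order all_algebra.
From mathcomp Require Import reals ring.
Import Order.TTheory GRing.Theory Num.Theory.
Local Open Scope ring_scope.

Definition o0 : 'I_3 := ord0.
Definition o1 : 'I_3 := Ordinal (isT : (1 < 3)%N).
Definition o2 : 'I_3 := Ordinal (isT : (2 < 3)%N).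

Lemma sum3 (R : nmodType) (F : 'I_3 -> R) : \sum_(i < 3) F i = F o0 + F o1 + F o2.
Proof.
rewrite !big_ord_recr big_ord0 /= add0r. congr (_ + _ + _); congr F; exact: val_inj.
Qed.

Lemma ord3P (i : 'I_3) : [\/ i = o0, i = o1 | i = o2].
Proof.
case: i => [[|[|[|n]]] Hi]; [apply: Or31|apply: Or32|apply: Or33|by []]; exact: val_inj.
Qed.

Definition fA {R : Type} (A : 'M[R]_3) (i j : nat) := A (inord i) (inord j).
Lemma Aval {R : Type} (A : 'M[R]_3) i j : A i j = fA A i j.
Proof. by rewrite /fA !inord_val. Qed.
Lemma det11 (R : comNzRingType) (A : 'M[R]_1) : \det A = A ord0 ord0.
Proof. exact: det_mx11. Qed.

Lemma det3 (R : comNzRingType) (A : 'M[R]_3) : \det A =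
  A o0 o0 * (A o1 o1 * A o2 o2 - A o1 o2 * A o2 o1)
  - A o0 o1 * (A o1 o0 * A o2 o2 - A o1 o2 * A o2 o0)
  + A o0 o2 * (A o1 o0 * A o2 o1 - A o1 o1 * A o2 o0).
Proof.
rewrite (expand_det_row _ o0) sum3 /cofactor.
rewrite !(expand_det_row _ ord0) !big_ord_recr big_ord0 /= !add0r.
rewrite !big_ord0 !add0r /cofactor !det11 !mxE /= !(Aval A) /bump /=. ring.
Qed.

Lemma vec3P {R : Type} (u v : 'rV[R]_3) :
  u 0 o0 = v 0 o0 -> u 0 o1 = v 0 o1 -> u 0 o2 = v 0 o2 -> u = v.
Proof.
move=> h0 h1 h2; apply/rowP => i; have [->|->|->] := ord3P i; by [].
Qed.

Lemma mat3P {R : Type} (A B : 'M[R]_3) :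
  (forall i, A i o0 = B i o0) -> (forall i, A i o1 = B i o1) -> (forall i, A i o2 = B i o2) -> A = B.
Proof.
move=> h0 h1 h2; apply/matrixP => i j; have [->|->|->] := ord3P j; by [].
Qed.

Lemma nz3 {R : nzRingType} (u : 'rV[R]_3) : u != 0 -> [\/ u 0 o0 != 0, u 0 o1 != 0 | u 0 o2 != 0].
Proof.
move=> hu; case: (eqVneq (u 0 o0) 0) => h0; last by apply: Or31.
case: (eqVneq (u 0 o1) 0) => h1; last by apply: Or32.
case: (eqVneq (u 0 o2) 0) => h2; last by apply: Or33.
have u0 : u = 0 by apply: vec3P; rewrite mxE.
by rewrite u0 eqxx in hu.
Qed.

Definition B {R : nzRingType} (Q : 'M[R]_3) (x y : 'rV[R]_3) := (x *m Q *m y^T) 0 0.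

Lemma BE {R : comNzRingType} (Q : 'M[R]_3) x y : B Q x y =
  x 0 o0 * (Q o0 o0 * y 0 o0 + Q o0 o1 * y 0 o1 + Q o0 o2 * y 0 o2) +
  x 0 o1 * (Q o1 o0 * y 0 o0 + Q o1 o1 * y 0 o1 + Q o1 o2 * y 0 o2) +
  x 0 o2 * (Q o2 o0 * y 0 o0 + Q o2 o1 * y 0 o1 + Q o2 o2 * y 0 o2).
Proof.
rewrite /B mxE sum3 !mxE !sum3. ring.
Qed.

Lemma gramE {R : comNzRingType} n (M : 'M[R]_(n,3)) (Q : 'M_3) i j :
  (M *m Q *m M^T) i j = B Q (row i M) (row j M).
Proof.
rewrite /B !mxE; apply: eq_bigr => k _; rewrite !mxE; congr (_ * _).
by apply: eq_bigr => l _; rewrite !mxE.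
Qed.

Definition cross {R : nzRingType} (u v : 'rV[R]_3) : 'rV[R]_3 :=
  \row_(k < 3) (if k == o0 then u 0 o1 * v 0 o2 - u 0 o2 * v 0 o1
                else if k == o1 then u 0 o2 * v 0 o0 - u 0 o0 * v 0 o2
                else u 0 o0 * v 0 o1 - u 0 o1 * v 0 o0).

Lemma crossE {R : nzRingType} (u v : 'rV[R]_3) :
  [/\ cross u v 0 o0 = u 0 o1 * v 0 o2 - u 0 o2 * v 0 o1,
      cross u v 0 o1 = u 0 o2 * v 0 o0 - u 0 o0 * v 0 o2 &
      cross u v 0 o2 = u 0 o0 * v 0 o1 - u 0 o1 * v 0 o0].
Proof. by rewrite !mxE. Qed.

Definition mk3 {R : Type} (u v w : 'rV[R]_3) : 'M[R]_3 :=
  \matrix_(i < 3, j < 3) (if i == o0 then u 0 j else if i == o1 then v 0 j else w 0 j).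

Lemma mk3E {R : Type} (u v w : 'rV[R]_3) :
  [/\ row o0 (mk3 u v w) = u, row o1 (mk3 u v w) = v & row o2 (mk3 u v w) = w].
Proof. by split; apply/rowP => j; rewrite !mxE. Qed.

Lemma mk3_map {R S : Type} (f : R -> S) (u v w : 'rV[R]_3) :
  map_mx f (mk3 u v w) = mk3 (map_mx f u) (map_mx f v) (map_mx f w).
Proof. apply/matrixP => i j; rewrite !mxE; have [->|->|->] := ord3P i; by rewrite /= ?mxE. Qed.

Lemma B_sym {R : comNzRingType} {Q : 'M[R]_3} (HQ : Q^T = Q) x y : B Q x y = B Q y x.
Proof.
have S i j : Q i j = Q j i by rewrite -{1}HQ mxE.
rewrite !BE (S o1 o0) (S o2 o0) (S o2 o1); ring.
Qed.

Lemma BZl {R : comNzRingType} (Q : 'M[R]_3) k x y : B Q (k *: x) y = k * B Q x y.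
Proof. rewrite !BE !mxE; ring. Qed.
Lemma BZr {R : comNzRingType} (Q : 'M[R]_3) k x y : B Q x (k *: y) = k * B Q x y.
Proof. rewrite !BE !mxE; ring. Qed.
Lemma BDl {R : comNzRingType} (Q : 'M[R]_3) x y z : B Q (x + y) z = B Q x z + B Q y z.
Proof. rewrite !BE !mxE; ring. Qed.
Lemma BDr {R : comNzRingType} (Q : 'M[R]_3) x y z : B Q x (y + z) = B Q x y + B Q x z.
Proof. rewrite !BE !mxE; ring. Qed.

Lemma test {R : fieldType} (a b c : R) : a != 0 -> a * b = c -> b = c / a.
Proof. move=> ha e; rewrite -e; field. exact: ha. Qed.

Lemma cross0 {R : fieldType} {u v : 'rV[R]_3} : u != 0 -> cross u v = 0 -> exists k, v = k *: u.
Proof.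
move=> hu hc; have [c0 c1 c2] := crossE u v.
rewrite hc mxE in c0; rewrite hc mxE in c1; rewrite hc mxE in c2.
move/eqP: c0; rewrite eq_sym subr_eq0 => /eqP c0.
move/eqP: c1; rewrite eq_sym subr_eq0 => /eqP c1.
move/eqP: c2; rewrite eq_sym subr_eq0 => /eqP c2.
have [h|h|h] := nz3 u hu.
- exists (v 0 o0 / u 0 o0); apply: vec3P; rewrite mxE.
  + field; exact: h.
  + apply: (mulfI h); rewrite c2; field; exact: h.
  + apply: (mulfI h); rewrite -c1; field; exact: h.
- exists (v 0 o1 / u 0 o1); apply: vec3P; rewrite mxE.
  + apply: (mulfI h); rewrite -c2; field; exact: h.
  + field; exact: h.
  + apply: (mulfI h); rewrite c0; field; exact: h.
- exists (v 0 o2 / u 0 o2); apply: vec3P; rewrite mxE.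
  + apply: (mulfI h); rewrite c1; field; exact: h.
  + apply: (mulfI h); rewrite -c0; field; exact: h.
  + field; exact: h.
Qed.

Lemma sos3 {R : realDomainType} (a b c : R) : a ^+ 2 + b ^+ 2 + c ^+ 2 = 0 -> [/\ a = 0, b = 0 & c = 0].
Proof.
move/eqP; rewrite paddr_eq0 ?addr_ge0 ?sqr_ge0 // => /andP[/eqP].
move/eqP; rewrite paddr_eq0 ?sqr_ge0 // => /andP[ha hb] hc.
by move: ha hb hc; rewrite !sqrf_eq0 => /eqP -> /eqP -> /eqP.
Qed.

Lemma det_gram {R : comNzRingType} (M Q : 'M[R]_3) : \det (M *m Q *m M^T) = \det M * \det Q * \det M.
Proof. by rewrite !det_mulmx det_tr. Qed.

Lemma B_nz {R : realFieldType} (Q : 'M[R]_3) (HQ : Q^T = Q) (HQd : \det Q != 0) u v :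
  B Q u u = 0 -> B Q v v = 0 -> u != 0 -> (forall k, v != k *: u) -> B Q u v != 0.
Proof.
move=> hu hv u0 hp; apply/negP => /eqP huv.
have m0 : cross u v != 0.
  by apply/negP => /eqP h; have [k hk] := cross0 u0 h; move/eqP: (hp k).
set M := mk3 u v (cross u v).
have dM : \det M = (cross u v 0 o0) ^+ 2 + (cross u v 0 o1) ^+ 2 + (cross u v 0 o2) ^+ 2.
  have [c0 c1 c2] := crossE u v.
  rewrite det3 /M /mk3 !mxE /=; ring.
have dM0 : \det M != 0.
  rewrite dM; apply/negP => /eqP /sos3 [h0 h1 h2]; move/eqP: m0; apply.
  by apply: vec3P; rewrite ?h0 ?h1 ?h2 mxE.
have : \det (M *m Q *m M^T) != 0 by rewrite det_gram !mulf_neq0.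
have [r0 r1 r2] := mk3E u v (cross u v).
rewrite det3 !gramE /M r0 r1 hu hv huv (B_sym HQ v u) huv.
by rewrite !(mul0r, mulr0, subr0, sub0r, addr0, add0r, oppr0) eqxx.
Qed.

Lemma nzcoords {R : fieldType} {a b c x0 x1 x2 : R} :
 a != 0 -> b != 0 -> c != 0 ->
 a*(x0*x1) + b*(x0*x2) + c*(x1*x2) = 0 ->
 a*x1 + b*x2 != 0 -> a*x0 + c*x2 != 0 -> b*x0 + c*x1 != 0 ->
 [/\ x0 != 0, x1 != 0 & x2 != 0].
Proof.
move=> ha hb hc E N0 N1 N2; split; apply/eqP => hx.
- move: E; rewrite hx !(mul0r, mulr0, add0r) => /eqP; rewrite !mulf_eq0 (negbTE hc) /=.
  case/orP => /eqP hy.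
  + by move: N2; rewrite hx hy !(mulr0, addr0) eqxx.
  + by move: N1; rewrite hx hy !(mulr0, addr0) eqxx.
- move: E; rewrite hx !(mul0r, mulr0, add0r, addr0) => /eqP; rewrite !mulf_eq0 (negbTE hb) /=.
  case/orP => /eqP hy.
  + by move: N2; rewrite hx hy !(mulr0, addr0) eqxx.
  + by move: N0; rewrite hx hy !(mulr0, addr0) eqxx.
- move: E; rewrite hx !(mul0r, mulr0, add0r, addr0) => /eqP; rewrite !mulf_eq0 (negbTE ha) /=.
  case/orP => /eqP hy.
  + by move: N1; rewrite hx hy !(mulr0, addr0) eqxx.
  + by move: N0; rewrite hx hy !(mulr0, addr0) eqxx.
Qed.

Lemma scal {R : fieldType} {a b c x0 x1 x2 y0 y1 y2 : R} :
 a != 0 -> b != 0 -> c != 0 ->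
 a*(x0*x1) + b*(x0*x2) + c*(x1*x2) = 0 ->
 a*(y0*y1) + b*(y0*y2) + c*(y1*y2) = 0 ->
 a*x1 + b*x2 != 0 -> a*x0 + c*x2 != 0 -> b*x0 + c*x1 != 0 ->
 a*y1 + b*y2 != 0 -> a*y0 + c*y2 != 0 -> b*y0 + c*y1 != 0 ->
 a*(x0*y1+x1*y0) + b*(x0*y2+x2*y0) + c*(x1*y2+x2*y1) != 0 ->
 let n0 := x0*x2*(y1*y2) - x1*x2*(y0*y2) in
 let n1 := x1*x2*(y0*y1) - x0*x1*(y1*y2) in
 let n2 := x0*x1*(y0*y2) - x0*x2*(y0*y1) in
 [/\ n0 != 0, b = a / n0 * n1 & c = a / n0 * n2].
Proof.
move=> ha hb hc Ex Ey Nx0 Nx1 Nx2 Ny0 Ny1 Ny2 Nxy n0 n1 n2.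
have [hx0 hx1 hx2] := nzcoords ha hb hc Ex Nx0 Nx1 Nx2.
have [hy0 hy1 hy2] := nzcoords ha hb hc Ey Ny0 Ny1 Ny2.
have e1 : c*n0 - a*n2 = x0*x2 * (a*(y0*y1) + b*(y0*y2) + c*(y1*y2))
                       - y0*y2 * (a*(x0*x1) + b*(x0*x2) + c*(x1*x2)).
  rewrite /n0 /n2; ring.
have e2 : a*n1 - b*n0 = x1*x2 * (a*(y0*y1) + b*(y0*y2) + c*(y1*y2))
                       - y1*y2 * (a*(x0*x1) + b*(x0*x2) + c*(x1*x2)).
  rewrite /n0 /n1; ring.
rewrite Ex Ey !mulr0 subr0 in e1 e2.
have hn0 : n0 != 0.
  apply/eqP => h0.
  move: e1 e2; rewrite h0 !mulr0 !sub0r ?subr0 => /eqP; rewrite oppr_eq0 mulf_eq0 (negbTE ha) /= => /eqP h2.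
  move=> /eqP; rewrite ?subr0 mulf_eq0 (negbTE ha) /= => /eqP h1.
  have d01 : x0*y1 - x1*y0 = 0.
    have : x2*y2*(x0*y1 - x1*y0) = 0 by rewrite -h0 /n0; ring.
    by move/eqP; rewrite !mulf_eq0 (negbTE hx2) (negbTE hy2) /= => /eqP.
  have d12 : x1*y2 - x2*y1 = 0.
    have : x0*y0*(x1*y2 - x2*y1) = 0 by rewrite -h2 /n2; ring.
    by move/eqP; rewrite !mulf_eq0 (negbTE hx0) (negbTE hy0) /= => /eqP.
  have d02 : x0*y2 - x2*y0 = 0.
    have : x1*(x0*y2 - x2*y0) = 0.
      have -> : x1*(x0*y2 - x2*y0) = x0*(x1*y2 - x2*y1) + x2*(x0*y1 - x1*y0) by ring.
      by rewrite d01 d12 !mulr0 addr0.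
    by move/eqP; rewrite !mulf_eq0 (negbTE hx1) /= => /eqP.
  move: Nxy; rewrite -(mulrI_eq0 _ (mulfI hx0)).
  have -> : x0 * (a*(x0*y1+x1*y0) + b*(x0*y2+x2*y0) + c*(x1*y2+x2*y1)) =
     2 * y0 * (a*(x0*x1) + b*(x0*x2) + c*(x1*x2)) + a*x0*(x0*y1 - x1*y0)
     + b*x0*(x0*y2 - x2*y0) + c*(x1*(x0*y2 - x2*y0) + x2*(x0*y1 - x1*y0)) by ring.
  by rewrite Ex d01 d02 !(mulr0, addr0) eqxx.
split => //.
- move/eqP: e2; rewrite subr_eq0 => /eqP e2.
  apply: (mulIf hn0); rewrite -e2; field; exact: hn0.
- move/eqP: e1; rewrite subr_eq0 => /eqP e1.
  apply: (mulIf hn0); rewrite e1; field; exact: hn0.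
Qed.

Lemma B_change {R : comNzRingType} (Q P : 'M[R]_3) x z :
  B Q (x *m P) (z *m P) = B (P *m Q *m P^T) x z.
Proof. by rewrite /B trmx_mul !mulmxA. Qed.

Definition r3 {R : Type} (s0 s1 s2 : R) : 'rV[R]_3 :=
  \row_(j < 3) (if j == o0 then s0 else if j == o1 then s1 else s2).

Definition symz {R : Type} (z a b c : R) : 'M[R]_3 :=
  mk3 (r3 z a b) (r3 a z c) (r3 b c z).

Lemma symz_map {R S : Type} (f : R -> S) z a b c :
  map_mx f (symz z a b c) = symz (f z) (f a) (f b) (f c).
Proof.
apply/matrixP => i j; rewrite !mxE; have [->|->|->] := ord3P i;
  have [->|->|->] := ord3P j; by rewrite /= ?mxE.
Qed.

Lemma eE {R : nzRingType} (k j : 'I_3) : ('e_k : 'rV[R]_3) 0 j = (k == j)%:R.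
Proof. by rewrite mxE eq_sym. Qed.

Definition i5 {k : nat} (h : (k < 5)%N) : 'I_5 := Ordinal h.

Lemma core {R : realType} (Q : 'M[R]_3) (HQ : Q^T = Q) (HQd : \det Q != 0)
  (w : 'I_5 -> 'rV[rat]_3) :
  (forall i, B Q (map_mx ratr (w i)) (map_mx ratr (w i)) = 0) ->
  (forall i j, i != j -> B Q (map_mx ratr (w i)) (map_mx ratr (w j)) != 0) ->
  rational_form Q.
Proof.
move=> Hiso Hnz.
set u := fun i => map_mx (ratr : rat -> R) (w i).
pose j0 := i5 (isT : (0 < 5)%N). pose j1 := i5 (isT : (1 < 5)%N).
pose j2 := i5 (isT : (2 < 5)%N). pose j3 := i5 (isT : (3 < 5)%N).
pose j4 := i5 (isT : (4 < 5)%N).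
set P0 := mk3 (w j0) (w j1) (w j2).
have hP : map_mx ratr P0 = mk3 (u j0) (u j1) (u j2) by rewrite mk3_map.
set P := mk3 (u j0) (u j1) (u j2).
have hP' : map_mx ratr P0 = P by exact: hP.
set G := P *m Q *m P^T.
set a := B Q (u j0) (u j1). set b := B Q (u j0) (u j2). set c := B Q (u j1) (u j2).
have [r0 r1 r2] := mk3E (u j0) (u j1) (u j2).
have Gent : G = symz 0 a b c.
  apply/matrixP => i j; rewrite /G gramE.
  have [->|->|->] := ord3P i; have [->|->|->] := ord3P j;
  by rewrite /symz /mk3 /r3 !mxE /= ?r0 ?r1 ?r2 ?Hiso // (B_sym HQ).
have ha : a != 0 by apply: Hnz.
have hb : b != 0 by apply: Hnz.
have hc : c != 0 by apply: Hnz.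
have dG : \det G = 2 * (a * b * c).
  by rewrite Gent det3 /symz /mk3 /r3 !mxE /=; ring.
have dP : \det P != 0.
  apply/negP => /eqP h0; move: dG; rewrite det_gram h0 !mul0r => /esym /eqP.
  by rewrite !mulf_eq0 pnatr_eq0 (negbTE ha) (negbTE hb) (negbTE hc).
have dP0 : \det P0 != 0 by move: dP; rewrite -hP' det_map_mx fmorph_eq0.
have PU : P \in unitmx by rewrite unitmxE unitfE.
have P0U : P0 \in unitmx by rewrite unitmxE unitfE.
set x0' := w j3 *m invmx P0. set y0' := w j4 *m invmx P0.
have [x hx] : exists x, x = map_mx (ratr : rat -> R) x0' by eexists.
have [y hy] : exists y, y = map_mx (ratr : rat -> R) y0' by eexists.
have hux : u j3 = x *m P by rewrite hx -hP' -map_mxM /x0' mulmxKV.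
have huy : u j4 = y *m P by rewrite hy -hP' -map_mxM /y0' mulmxKV.
have he0 : u j0 = 'e_o0 *m P by rewrite -rowE r0.
have he1 : u j1 = 'e_o1 *m P by rewrite -rowE r1.
have he2 : u j2 = 'e_o2 *m P by rewrite -rowE r2.
have Ex : a*(x 0 o0 * x 0 o1) + b*(x 0 o0 * x 0 o2) + c*(x 0 o1 * x 0 o2) = 0.
  have : B G x x = 2 * (a*(x 0 o0 * x 0 o1) + b*(x 0 o0 * x 0 o2) + c*(x 0 o1 * x 0 o2)).
    by rewrite Gent BE /symz /mk3 /r3 !mxE /=; ring.
  rewrite /G -B_change -hux Hiso => /esym/eqP; rewrite mulf_eq0 pnatr_eq0 /= => /eqP //.
have Ey : a*(y 0 o0 * y 0 o1) + b*(y 0 o0 * y 0 o2) + c*(y 0 o1 * y 0 o2) = 0.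
  have : B G y y = 2 * (a*(y 0 o0 * y 0 o1) + b*(y 0 o0 * y 0 o2) + c*(y 0 o1 * y 0 o2)).
    by rewrite Gent BE /symz /mk3 /r3 !mxE /=; ring.
  rewrite /G -B_change -huy Hiso => /esym/eqP; rewrite mulf_eq0 pnatr_eq0 /= => /eqP //.
have BG z k : B G z 'e_k = B Q (z *m P) ('e_k *m P) by rewrite /G B_change.
have Nx0 : a * x 0 o1 + b * x 0 o2 != 0.
  have -> : a * x 0 o1 + b * x 0 o2 = B G x 'e_o0 by rewrite Gent BE /symz /mk3 /r3 !mxE /=; ring.
  by rewrite BG -hux -he0; apply: Hnz.
have Nx1 : a * x 0 o0 + c * x 0 o2 != 0.
  have -> : a * x 0 o0 + c * x 0 o2 = B G x 'e_o1 by rewrite Gent BE /symz /mk3 /r3 !mxE /=; ring.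
  by rewrite BG -hux -he1; apply: Hnz.
have Nx2 : b * x 0 o0 + c * x 0 o1 != 0.
  have -> : b * x 0 o0 + c * x 0 o1 = B G x 'e_o2 by rewrite Gent BE /symz /mk3 /r3 !mxE /=; ring.
  by rewrite BG -hux -he2; apply: Hnz.
have Ny0 : a * y 0 o1 + b * y 0 o2 != 0.
  have -> : a * y 0 o1 + b * y 0 o2 = B G y 'e_o0 by rewrite Gent BE /symz /mk3 /r3 !mxE /=; ring.
  by rewrite BG -huy -he0; apply: Hnz.
have Ny1 : a * y 0 o0 + c * y 0 o2 != 0.
  have -> : a * y 0 o0 + c * y 0 o2 = B G y 'e_o1 by rewrite Gent BE /symz /mk3 /r3 !mxE /=; ring.
  by rewrite BG -huy -he1; apply: Hnz.
have Ny2 : b * y 0 o0 + c * y 0 o1 != 0.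
  have -> : b * y 0 o0 + c * y 0 o1 = B G y 'e_o2 by rewrite Gent BE /symz /mk3 /r3 !mxE /=; ring.
  by rewrite BG -huy -he2; apply: Hnz.
have Nxy : a*(x 0 o0*y 0 o1+x 0 o1*y 0 o0) + b*(x 0 o0*y 0 o2+x 0 o2*y 0 o0)
           + c*(x 0 o1*y 0 o2+x 0 o2*y 0 o1) != 0.
  have -> : a*(x 0 o0*y 0 o1+x 0 o1*y 0 o0) + b*(x 0 o0*y 0 o2+x 0 o2*y 0 o0)
           + c*(x 0 o1*y 0 o2+x 0 o2*y 0 o1) = B G x y
    by rewrite Gent BE /symz /mk3 /r3 !mxE /=; ring.
  by rewrite /G -B_change -hux -huy; apply: Hnz.
have := scal ha hb hc Ex Ey Nx0 Nx1 Nx2 Ny0 Ny1 Ny2 Nxy.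
move=> /= [hn0 hbn hcn].
have hxk k : x 0 k = ratr (x0' 0 k) by rewrite hx mxE.
have hyk k : y 0 k = ratr (y0' 0 k) by rewrite hy mxE.
rewrite !hxk !hyk -!rmorphM -!rmorphB in hn0 hbn hcn.
set N0 := (_ - _ : rat) in hn0 hbn hcn.
set N1 := (_ - _ : rat) in hbn.
set N2 := (_ - _ : rat) in hcn.
set lam := a / ratr N0.
have GQ : Q = invmx P *m G *m invmx P^T.
  by rewrite /G !mulmxA mulVmx // mul1mx -mulmxA mulmxV ?unitmx_tr // mulmx1.
have hG : G = lam *: map_mx ratr (symz 0 N0 N1 N2).
  rewrite Gent symz_map; apply/matrixP => i j; rewrite [RHS]mxE.
  have [->|->|->] := ord3P i; have [->|->|->] := ord3P j; rewrite /symz /mk3 /r3 !mxE /= ?rmorph0 ?mulr0 //.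
  all: try (rewrite /lam; field; exact: hn0).
exists lam, (invmx P0 *m symz 0 N0 N1 N2 *m (invmx P0)^T); split.
  by rewrite /lam mulf_neq0 ?invr_eq0.
rewrite GQ hG -scalemxAr -scalemxAl; congr (_ *: _).
by rewrite !map_mxM -map_trmx map_invmx hP' trmx_inv.
Qed.

Lemma zvecE {R : realType} (v : 'rV[int]_3) :
  zvec R v = map_mx ratr (map_mx (fun z : int => z%:~R : rat) v).
Proof. by apply/rowP => k; rewrite !mxE ratr_int. Qed.

Lemma cross_map {R S : comNzRingType} (f : {rmorphism R -> S}) (u v : 'rV[R]_3) :
  map_mx f (cross u v) = cross (map_mx f u) (map_mx f v).
Proof.
apply/rowP => k; rewrite !mxE; have [->|->|->] := ord3P k; by rewrite /= rmorphB !rmorphM.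
Qed.

Lemma line_neq {R : realType} (z1 z2 : 'rV[R]_3) :
  z1 != 0 -> z2 != 0 -> (<[z1]> != <[z2]>)%VS -> forall k, z2 != k *: z1.
Proof.
move=> h1 h2 hne k; apply/negP => /eqP hk; move/negP: hne; apply.
rewrite eq_sym eqEdim !dim_vline h1 h2 leqnn andbT -memvE hk.
by rewrite memvZ // memv_line.
Qed.

Lemma line_iso {R : realType} (Q : 'M[R]_3) (z : 'rV[R]_3) :
  isotropic_line Q <[z]>%VS -> B Q z z = 0.
Proof.
case=> x [/vlineP [k ->] [hx hq]].
have hk : k != 0 by apply: contraNneq hx => ->; rewrite scale0r.
move: hq; rewrite /qf -/(B Q _ _) BZl BZr => /eqP; rewrite !mulf_eq0 (negbTE hk) /=.
by move/eqP.
Qed.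

Lemma five {T : eqType} (x0 : T) (s : seq T) :
  uniq s -> (4 < size s)%N ->
  (forall i : 'I_5, nth x0 s i \in s) /\
  (forall i j : 'I_5, i != j -> nth x0 s i != nth x0 s j).
Proof.
move=> us hs; have lt i : (nat_of_ord (i : 'I_5) < size s)%N.
  by apply: leq_trans hs; exact: ltn_ord.
split => [i|i j hij]; first exact: mem_nth.
by rewrite nth_uniq.
Qed.

Definition adj3 {R : comNzRingType} (Q : 'M[R]_3) : 'M[R]_3 :=
  let q i j := Q i j in
  mk3 (r3 (q o1 o1 * q o2 o2 - q o1 o2 * q o2 o1)
          (- (q o0 o1 * q o2 o2 - q o0 o2 * q o2 o1))
          (q o0 o1 * q o1 o2 - q o0 o2 * q o1 o1))
      (r3 (- (q o1 o0 * q o2 o2 - q o1 o2 * q o2 o0))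
          (q o0 o0 * q o2 o2 - q o0 o2 * q o2 o0)
          (- (q o0 o0 * q o1 o2 - q o0 o2 * q o1 o0)))
      (r3 (q o1 o0 * q o2 o1 - q o1 o1 * q o2 o0)
          (- (q o0 o0 * q o2 o1 - q o0 o1 * q o2 o0))
          (q o0 o0 * q o1 o1 - q o0 o1 * q o1 o0)).

Lemma adj3_mul {R : comNzRingType} (Q : 'M[R]_3) : adj3 Q *m Q = \det Q *: 1%:M.
Proof.
rewrite det3; apply/matrixP => i j; rewrite !mxE sum3.
have [->|->|->] := ord3P i; have [->|->|->] := ord3P j;
  rewrite /adj3 /mk3 /r3 !mxE /=; ring.
Qed.

Lemma adj3_sym {R : comNzRingType} (Q : 'M[R]_3) : Q^T = Q -> (adj3 Q)^T = adj3 Q.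
Proof.
move=> HQ; have S i j : Q i j = Q j i by rewrite -{1}HQ mxE.
apply/matrixP => i j; rewrite !mxE.
have [->|->|->] := ord3P i; have [->|->|->] := ord3P j;
  rewrite /adj3 /mk3 /r3 ?mxE /= ?(S o1 o0) ?(S o2 o0) ?(S o2 o1); ring.
Qed.

Lemma adj3_cross {R : comNzRingType} (Q : 'M[R]_3) u v : Q^T = Q ->
  B (adj3 Q) (cross u v) (cross u v) = B Q u u * B Q v v - B Q u v ^+ 2.
Proof.
move=> HQ; have S i j : Q i j = Q j i by rewrite -{1}HQ mxE.
rewrite !BE /adj3 /mk3 /r3 !mxE /= ?(S o1 o0) ?(S o2 o0) ?(S o2 o1); ring.
Qed.

Definition dot3 {R : nzRingType} (x y : 'rV[R]_3) :=
  x 0 o0 * y 0 o0 + x 0 o1 * y 0 o1 + x 0 o2 * y 0 o2.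

Lemma dot_cross {R : comNzRingType} (u v : 'rV[R]_3) k l :
  dot3 (k *: u + l *: v) (cross u v) = 0.
Proof. rewrite /dot3 !mxE /=; ring. Qed.

Lemma span_dot {R : realFieldType} {u v x : 'rV[R]_3} : cross u v != 0 ->
  dot3 x (cross u v) = 0 -> exists k l, x = k *: u + l *: v.
Proof.
move=> hn hx.
set n := cross u v.
set nn := dot3 n n.
have hnn : nn != 0.
  apply/negP => /eqP h; move: h; rewrite /nn /dot3 -!expr2 => /sos3 [h0 h1 h2].
  by move/eqP: hn; apply; apply: vec3P; rewrite ?h0 ?h1 ?h2 mxE.
set al := dot3 u x * dot3 v v - dot3 v x * dot3 u v.
set be := dot3 v x * dot3 u u - dot3 u x * dot3 u v.
have key k : nn * x 0 k = dot3 x n * n 0 k + al * u 0 k + be * v 0 k.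
  rewrite /nn /al /be /n /dot3 !mxE /=.
  have [->|->|->] := ord3P k; rewrite /=; ring.
exists (al / nn), (be / nn); apply/rowP => k; rewrite !mxE.
apply: (mulfI hnn); rewrite key hx mul0r add0r; field; exact: hnn.
Qed.

Lemma plane_nz {R : realFieldType} (u v : 'rV[R]_3) :
  \dim (<[u]> + <[v]>)%VS = 2%N -> cross u v != 0.
Proof.
move=> hd; apply/negP => /eqP hc.
have : (\dim (<[u]> + <[v]>)%VS <= 1)%N; last by rewrite hd.
case: (eqVneq u 0) => [->|hu].
  apply: leq_trans (dimv_add_leqif _ _) _; rewrite !dim_vline eqxx /=.
  by case: (v != 0).
have [k hk] := cross0 hu hc.
have -> : (<[u]> + <[v]>)%VS = <[u]>%VS.
  by apply/addv_idPl; rewrite -memvE hk memvZ // memv_line.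
by rewrite dim_vline; case: (u != 0).
Qed.

Lemma mem_plane {R : realFieldType} {u v x : 'rV[R]_3} :
  x \in (<[u]> + <[v]>)%VS -> dot3 x (cross u v) = 0.
Proof.
case/memv_addP => y /vlineP [k ->] [z /vlineP [l ->] ->].
exact: dot_cross.
Qed.

Lemma dot_plane {R : realFieldType} (u v x : 'rV[R]_3) : cross u v != 0 ->
  dot3 x (cross u v) = 0 -> x \in (<[u]> + <[v]>)%VS.
Proof.
move=> hn hx; have [k [l ->]] := span_dot hn hx.
by apply: memv_add; rewrite memvZ // memv_line.
Qed.

Lemma dotZr {R : comNzRingType} (x n : 'rV[R]_3) k : dot3 x (k *: n) = k * dot3 x n.
Proof. rewrite /dot3 !mxE; ring. Qed.

Lemma plane_neq {R : realFieldType} (u1 v1 u2 v2 : 'rV[R]_3) :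
  cross u1 v1 != 0 -> cross u2 v2 != 0 ->
  (<[u1]> + <[v1]> != <[u2]> + <[v2]>)%VS ->
  forall k, cross u2 v2 != k *: cross u1 v1.
Proof.
move=> h1 h2 hne k; apply/negP => /eqP hk; move/negP: hne; apply.
have k0 : k != 0 by apply: contraNneq h2 => k0; rewrite hk k0 scale0r.
rewrite eqEsubv; apply/andP; split; apply/subvP => x hx.
- by apply: dot_plane => //; rewrite hk dotZr (mem_plane hx) mulr0.
- apply: dot_plane => //; move: (mem_plane hx); rewrite hk dotZr => /eqP.
  by rewrite mulf_eq0 (negbTE k0) /= => /eqP.
Qed.

Lemma degen {R : realType} (Q : 'M[R]_3) (u v : 'rV[R]_3) : Q^T = Q ->
  degenerate_plane Q (<[u]> + <[v]>)%VS -> B Q u u * B Q v v - B Q u v ^+ 2 = 0.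
Proof.
move=> HQ [c [a Ha]].
have := memv_add (memv_line u) (mem0v <[v]>%VS); rewrite addr0 => mu.
have := memv_add (mem0v <[u]>%VS) (memv_line v); rewrite add0r => mv.
have muv : u + v \in (<[u]> + <[v]>)%VS by rewrite memv_add ?memv_line.
have hu := Ha _ mu; have hv := Ha _ mv; have huv := Ha _ muv.
rewrite /qf -!/(B Q _ _) in hu hv huv.
rewrite mulmxDl mxE in huv.
set al := (u *m a^T) 0 0 in hu huv. set be := (v *m a^T) 0 0 in hv huv.
rewrite BDl !BDr (B_sym HQ v u) hu hv in huv.
have e : B Q u v = c * al * be.
  have h2 : (2:R) != 0 by rewrite pnatr_eq0.
  apply: (mulfI h2).
  have -> : 2 * B Q u v = c * (al + be) ^+ 2 - c * al ^+ 2 - c * be ^+ 2 by rewrite -huv; ring.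
  ring.
by rewrite hu hv e; ring.
Qed.

Theorem lemma2p2 (R : realType) (Q : 'M[R]_3) :
  Q^T = Q -> indefinite Q -> irrational_form Q -> \det Q = 1 ->
  (forall s : seq {vspace 'rV[R]_3}, uniq s ->
     (forall U, U \in s -> rational_line U /\ isotropic_line Q U) ->
     (size s <= 4)%N) /\
  (forall s : seq {vspace 'rV[R]_3}, uniq s ->
     (forall U, U \in s -> rational_plane U /\ degenerate_plane Q U) ->
     (size s <= 4)%N).
Proof.
move=> HQ _ Hirr HdQ.
have HQd : \det Q != 0 by rewrite HdQ oner_eq0.
split.
- move=> s us Hs; rewrite leqNgt; apply/negP => hs.
  have [Hin Hne] := five 0%VS s us hs.
  have : forall i : 'I_5, exists v : 'rV[int]_3, nth 0%VS s i = <[zvec R v]>%VS.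
    by move=> i; have [[_ [v ->]] _] := Hs _ (Hin i); exists v.
  case/fin_all_exists => vv hvv.
  have zi i : zvec R (vv i) != 0.
    have [[hd _] _] := Hs _ (Hin i).
    by move: hd; rewrite hvv dim_vline; case: (zvec R (vv i) != 0).
  have iso i : B Q (zvec R (vv i)) (zvec R (vv i)) = 0.
    by have [_ hiso] := Hs _ (Hin i); rewrite hvv in hiso; exact: line_iso hiso.
  apply: Hirr; apply: (@core R Q HQ HQd (fun i => map_mx (fun z : int => z%:~R : rat) (vv i))).
  + by move=> i; rewrite -zvecE; exact: iso.
  + move=> i j hij; rewrite -!zvecE; apply: B_nz => //; apply: line_neq => //.
    by rewrite -!hvv; exact: Hne.
- move=> s us Hs; rewrite leqNgt; apply/negP => hs.
  have [Hin Hne] := five 0%VS s us hs.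
  set K := adj3 Q.
  have hK : K *m Q = 1%:M by rewrite adj3_mul HdQ scale1r.
  have KT : K^T = K by exact: adj3_sym.
  have dK : \det K != 0.
    by move: (congr1 determinant hK); rewrite det_mulmx HdQ mulr1 det1 => ->; rewrite oner_eq0.
  have KU : K \in unitmx by rewrite unitmxE unitfE.
  have QK : Q = invmx K by rewrite -[Q](mulKmx KU) hK mulmx1.
  have : forall i : 'I_5, exists uv : 'rV[int]_3 * 'rV[int]_3,
      nth 0%VS s i = (<[zvec R uv.1]> + <[zvec R uv.2]>)%VS.
    by move=> i; have [[_ [u [v ->]]] _] := Hs _ (Hin i); exists (u, v).
  case/fin_all_exists => uv huv.
  have ni i : cross (zvec R (uv i).1) (zvec R (uv i).2) != 0.
    have [[hd _] _] := Hs _ (Hin i); rewrite huv in hd; exact: plane_nz hd.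
  have iso i : B K (cross (zvec R (uv i).1) (zvec R (uv i).2))
                   (cross (zvec R (uv i).1) (zvec R (uv i).2)) = 0.
    have [_ hdeg] := Hs _ (Hin i); rewrite huv in hdeg.
    by rewrite adj3_cross // degen.
  apply: Hirr.
  suff : rational_form K.
    case=> c [K0 [c0 hK0]]; exists c^-1, (invmx K0); split; first by rewrite invr_eq0.
    rewrite QK hK0 invmxZ; last by rewrite -hK0.
    by rewrite map_invmx.
  apply: (@core R K KT dK (fun i => cross (map_mx (fun z : int => z%:~R : rat) (uv i).1)
                                          (map_mx (fun z : int => z%:~R : rat) (uv i).2))).
  + by move=> i; rewrite cross_map -!zvecE; exact: iso.
  + move=> i j hij; rewrite !cross_map -!zvecE; apply: B_nz => //; apply: plane_neq => //.
    by rewrite -!huv; exact: Hne.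
Qed.
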